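(* Let $n$ be a positive integer and $w_1\le\dots\le w_m$ a feasible partition of $n$ with partial sums $R_i=w_1+\dots+w_i$, $R_0=0$. Then for every $1\le i\le m$, $w_i \le \frac{2R_i+1}{3}$.
   Context: A weighing partition of a positive integer $n$ is a multiset of positive integers summing to $n$ such that every integer $\ell$ with $1\le\ell\le n$ is a sum $\sum_j u_jw_j$ with $u_j\in\{-1,0,1\}$. A feasible partition of $n$ is a weighing partition of $n$ whose number of parts $m$ is minimal among all weighing partitions of $n$, written $w_1\le\dots\le w_m$. *)

(* Defs.v *)
From mathcomp Require Import all_boot all_order all_algebra.
Set Implicit Arguments. Unset Strict Implicit. Unset Printing Implicit Defensive.
Import Order.TTheory GRing.Theory Num.Theory.

(* A multiset of positive integers is represented by a list [w] (order irrelevant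
   for the definitions below; feasible partitions are additionally sorted). *)

Definition signed_rep (w : seq nat) (l : int) : Prop :=
  exists u : seq int,
    size u = size w /\
    all (fun c : int => (c == 0) || (c == 1) || (c == (-1)%R)) u /\
    (\sum_(j < size w) (nth 0 u j) * (nth 0%N w j)%:Z = l)%R.

Definition weighing_partition (n : nat) (w : seq nat) : Prop :=
  all (fun x => 0 < x)%N w /\ sumn w = n /\
  forall l : nat, (1 <= l <= n)%N -> signed_rep w l%:Z.

Definition feasible_partition (n : nat) (w : seq nat) : Prop :=
  weighing_partition n w /\
  forall w' : seq nat, weighing_partition n w' -> (size w <= size w')%N.

(* Main.v *)
Require Import Defs.
From mathcomp Require Import all_boot all_order all_algebra.
From mathcomp Require Import zify ring.
Import Order.TTheory GRing.Theory Num.Theory.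
Lemma sumn_take_big (w : seq nat) (k : nat) :
  sumn (take k w) = \sum_(j < size w | (j < k)%N) nth 0%N w j.
Proof.
elim: w k => [|a w IH] k /=; first by rewrite big_ord0.
rewrite big_mkcond big_ord_recl /=; case: k => [|k] /=.
  by rewrite big1 //.
rewrite IH big_mkcond; congr (_ + _).
Qed.

Lemma sumn_big (w : seq nat) :
  sumn w = \sum_(j < size w) nth 0%N w j.
Proof. by rewrite -{1}(take_size w) sumn_take_big; apply: eq_bigl => j; rewrite ltn_ord. Qed.
Lemma core (n : nat) (w : seq nat) (k : nat) :
  sorted leq w -> weighing_partition n w -> (k < size w)%N ->
  (nth 0%N w k <= 2 * sumn (take k w) + 1)%N.
Proof.
move=> srt [pos [sw rep]] km.
set A := sumn (take k w); set x := nth 0%N w k.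
rewrite leqNgt; apply/negP => hx.
set B := \sum_(j < size w | ~~ (j < k)%N) nth 0%N w j.
have hn : n = A + B.
  by rewrite -sw sumn_big /A sumn_take_big (bigID (fun j : 'I_(size w) => (j < k)%N)).
have hB : (x <= B)%N.
  rewrite /B (bigD1 (Ordinal km)) /=; last by rewrite ltnn.
  exact: leq_addr.
have [u [su [hu hsum]]] := rep (B - A - 1)%N ltac:(apply/andP; split; lia).
set F := fun j : 'I_(size w) => (nth 0 u j * (Posz (nth 0%N w j)))%R.
rewrite (bigID (fun j : 'I_(size w) => (j < k)%N)) /= in hsum.
have hwj : forall j : 'I_(size w), (k <= j)%N -> (x <= nth 0%N w j)%N.
  move=> j kj; apply: (sorted_leq_nth leq_trans leqnn) => //; rewrite inE //.
have hu' : forall j : 'I_(size w), [|| nth 0 u j == 0, nth 0 u j == 1 | nth 0 u j == -1]%R.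
  move=> j; have := all_nthP 0%R hu; move=> /(_ j); rewrite su ltn_ord => /(_ isT).
  by rewrite orbA.
set Lo := (\sum_(j < size w | (j < k)%N) _)%R in hsum.
set Hi := (\sum_(j < size w | ~~ (j < k)%N) _)%R in hsum.
have hLo : (- ((Posz A)) <= Lo <= (Posz A))%R.
  have hA : (Posz A) = (\sum_(j < size w | (j < k)%N) (Posz (nth 0%N w j)))%R.
    by rewrite /A sumn_take_big (big_morph Posz PoszD (erefl _)).
  rewrite hA -sumrN; apply/andP; split; apply: ler_sum => j _;
   case/or3P: (hu' j) => /eqP ->; lia.
set D := (\sum_(j < size w | ~~ (j < k)%N) ((1 - nth 0 u j) * (Posz (nth 0%N w j))))%R.
have hHi : Hi = ((Posz B) - D)%R.
  rewrite /D /B (big_morph Posz PoszD (erefl _)) -sumrB; apply: eq_bigr => j _; ring.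
have hD : D = 0%R \/ ((Posz x) <= D)%R.
  case: (boolP [exists j : 'I_(size w), ~~ (j < k)%N && (nth 0 u j != 1)%R]).
    case/existsP => j /andP [jk uj]; right.
    rewrite /D (bigD1 j) //=.
    have t0 : (0 <= \sum_(i < size w | ~~ (i < k)%N && (i != j)) (1 - nth 0 u i) * (Posz (nth 0%N w i)))%R.
      apply: sumr_ge0 => i _; case/or3P: (hu' i) => /eqP ->; lia.
    have := hwj j ltac:(lia).
    move: uj; case/or3P: (hu' j) => /eqP -> // => _; rewrite ?subr0 ?opprK ?mul1r; move: t0; set S := (\sum_(_ < _ | _) _)%R; clearbody S x; lia.
  rewrite negb_exists => /forallP hall; left.
  rewrite /D big1 // => j jk; have := hall j; rewrite jk /= negbK => /eqP ->; lia.
lia.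
Qed.

Theorem mainTheorem5 (n : nat) (w : seq nat) :
  (0 < n)%N ->
  sorted leq w ->
  feasible_partition n w ->
  forall i : nat, (1 <= i <= size w)%N ->
    ((nth 0%N w i.-1)%:R <= (2 * (sumn (take i w))%:R + 1) / 3 :> rat)%R.
Proof.
move=> n0 srt [wp _] i /andP [i1 im].
have km : (i.-1 < size w)%N by lia.
have h := @core n w i.-1 srt wp km.
have ei : i = i.-1.+1 by lia.
rewrite {2}ei (take_nth 0%N km) sumn_rcons.
move: h; set A := sumn (take i.-1 w); set x := nth 0%N w i.-1 => h.
have h3 : (x * 3 <= 2 * (A + x) + 1)%N by lia.
rewrite ler_pdivlMr //.
move: h3; rewrite -(ler_nat rat) natrM natrD natrM natrD.
by [].
Qed.
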